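(* Let $3\le w<n$. If there exists a Steiner system $S(3,w,n)$ such that every $S(2,w-1,n-1)$ system derived from it is resolvable, then $q'_0(3,w,n)=\frac{n-2}{w-2}+1$.
   Context: $\mathbb{Z}_q=\{0,\dots,q-1\}$ (an alphabet); $\mathrm{wt}$ = number of nonzero coordinates; $d$ = Hamming distance; $J_q(n,w)$ = weight-$w$ words of $\mathbb{Z}_q^n$. An $(n,w,d)_q$ code of size $M$ is a subset $C\subseteq J_q(n,w)$ with $|C|=M$ and pairwise distances at least $d$. A Steiner system $S(t,k,n)$ is a pair $(N,B)$, $|N|=n$, $B$ a set of $k$-subsets (blocks) of $N$ with every $t$-subset of $N$ in exactly one block. For a point $p\in N$ (when $t\ge2$), the derived system is $(N\setminus\{p\},\{\beta\setminus\{p\}: p\in\beta\in B\})$, an $S(t-1,k-1,n-1)$. A Steiner system $S(t,k,n)$ is resolvable if its block set can be partitioned into classes each of which is a partition of $N$. For $t,k,n$ such that an $S(t,k,n)$ exists, $q'_0(t,k,n)$ is the smallest $q$ for which an $(n,k,2k-t+1)_q$ code of size $\binom{n}{t}/\binom{k}{t}$ exists. *)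

(* Defs.v *)
From mathcomp Require Import all_boot.
Set Implicit Arguments. Unset Strict Implicit. Unset Printing Implicit Defensive.

Definition word (q n : nat) := {ffun 'I_n -> 'I_q}.

Definition wt (q n : nat) (x : word q n) : nat :=
  #|[set i : 'I_n | nat_of_ord (x i) != 0]|.

Definition hdist (q n : nat) (x y : word q n) : nat :=
  #|[set i : 'I_n | x i != y i]|.

Definition is_code (q n w d M : nat) (C : {set word q n}) : Prop :=
  [/\ forall x, x \in C -> wt x = w,
      forall x y, x \in C -> y \in C -> x != y -> (d <= hdist x y)%N
    & #|C| = M].

Definition code_exists (q n w d M : nat) : Prop :=
  exists C : {set word q n}, @is_code q n w d M C.

Definition steiner_system (t k n : nat) (B : {set {set 'I_n}}) : Prop :=
  (forall b, b \in B -> #|b| = k) /\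
  (forall T : {set 'I_n}, #|T| = t -> #|[set b in B | T \subset b]| = 1).

(* Blocks of the derived system at point p (on the point set [set~ p]). *)
Definition derived_blocks (n : nat) (B : {set {set 'I_n}}) (p : 'I_n)
  : {set {set 'I_n}} := [set b :\ p | b in [set b in B | p \in b]].

Definition resolvable (T : finType) (X : {set T}) (D : {set {set T}}) : Prop :=
  exists Cls : {set {set {set T}}},
    partition Cls D /\ (forall P, P \in Cls -> partition P X).

Definition is_q0' (t k n m : nat) : Prop :=
  code_exists m n k (2 * k - t + 1) ('C(n, t) %/ 'C(k, t)) /\
  (forall q, code_exists q n k (2 * k - t + 1) ('C(n, t) %/ 'C(k, t)) -> (m <= q)%N).

(* Main.v *)
Require Import Defs.
From mathcomp Require Import all_boot.
From mathcomp Require Import zify.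
Set Implicit Arguments. Unset Strict Implicit. Unset Printing Implicit Defensive.

Lemma card_sep (T : finType) (A : {set T}) (P : pred T) :
  #|[set x in A | P x]| = \sum_(x in A) P x.
Proof.
rewrite -sum1_card big_mkcond [RHS]big_mkcond /=; apply: eq_bigr => x _.
by rewrite inE; case: (x \in A); case: (P x).
Qed.

Lemma dcount (T : finType) (F S : {set {set T}}) :
  \sum_(X in S) #|[set f in F | X \subset f]| = \sum_(f in F) #|[set X in S | X \subset f]|.
Proof.
under eq_bigr do rewrite card_sep.
by rewrite exchange_big /=; apply: eq_bigr => f _; rewrite card_sep.
Qed.

Lemma triples_count (n w : nat) (F : {set {set 'I_n}}) :
  (forall b, b \in F -> #|b| = w) ->
  \sum_(X in [set X : {set 'I_n} | #|X| == 3]) #|[set f in F | X \subset f]| = #|F| * 'C(w, 3).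
Proof.
move=> Fw; rewrite dcount -sum_nat_const; apply: eq_bigr => f fF.
rewrite -(Fw f fF) -cards_draws; apply: eq_card => X; rewrite !inE andbC //.
Qed.

Lemma steiner_card n w B : @steiner_system 3 w n B -> #|B| * 'C(w,3) = 'C(n,3).
Proof.
case=> Bw B1; rewrite -triples_count // -[X in 'C(X, 3)]card_ord -card_draws -sum1_card.
by apply: eq_bigr => X; rewrite inE => /eqP; exact: B1.
Qed.

Lemma packing n w (F : {set {set 'I_n}}) : (forall b, b \in F -> #|b| = w) ->
  (forall X : {set 'I_n}, #|X| = 3 -> #|[set f in F | X \subset f]| <= 1) ->
  #|F| * 'C(w,3) = 'C(n,3) -> @steiner_system 3 w n F.
Proof.
move=> Fw F1 cnt; split=> // X X3.
apply/eqP; rewrite eqn_leq F1 //=.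
rewrite lt0n; apply/negP => /eqP X0.
have: #|F| * 'C(w,3) < 'C(n,3).
  rewrite -triples_count // -[X' in 'C(X', 3)]card_ord -card_draws -sum1_card.
  have XS : X \in [set Y : {set 'I_n} | #|Y| == 3] by rewrite inE X3.
  rewrite (bigD1 X) //= [in X' in _ < X'](bigD1 X) //= X0 add0n add1n ltnS.
  apply: leq_sum => Y /andP[+ _]; rewrite inE => /eqP Y3; exact: F1.
by rewrite cnt ltnn.
Qed.

Lemma card3 n (a b c : 'I_n) : a != b -> c \notin [set a; b] -> #|[set a; b; c]| = 3.
Proof.
move=> ab cn; rewrite setUC cardsU1 cn cards2 ab //.
Qed.

Lemma mk3_inj n (a b : 'I_n) : {in ~: [set a; b] &, injective (fun c => [set a; b; c])}.
Proof.
move=> c1 c2; rewrite !inE => /norP[c1a c1b] _ E.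
have : c1 \in [set a; b; c1] by rewrite !inE eqxx !orbT.
by rewrite E !inE (negbTE c1a) (negbTE c1b) /= => /eqP.
Qed.

Lemma pair_count n w (F : {set {set 'I_n}}) (a b : 'I_n) : @steiner_system 3 w n F -> a != b ->
  #|[set f in F | (a \in f) && (b \in f)]| * (w - 2) = n - 2.
Proof.
move=> [Fw F1] ab.
pose S := (fun c => [set a; b; c]) @: ~: [set a; b].
have L : \sum_(X in S) #|[set f in F | X \subset f]| = n - 2.
  rewrite -[n in RHS]card_ord -(cardsC [set a; b]) cards2 ab.
  rewrite addKn -(card_in_imset (@mk3_inj n a b)) -sum1_card; apply: eq_bigr => X /imsetP[c cS ->].
  by apply: F1; apply: card3; rewrite // -in_setC.
rewrite -L dcount card_sep big_distrl /=; apply: eq_bigr => f fF.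
case: (boolP ((a \in f) && (b \in f))) => [/andP[af bf]|nab]; last first.
  rewrite mul0n; apply/esym/eqP; rewrite cards_eq0; apply/eqP/setP => X; rewrite !inE.
  apply/negbTE/andP => [[/imsetP[c _ ->] sub]]; case/negP: nab.
  by rewrite !(subsetP sub) // !inE eqxx ?orbT.
rewrite mul1n -(Fw f fF); symmetry.
have sab : [set a; b] \subset f by rewrite subUset !sub1set af bf.
rewrite (_ : [set X in S | X \subset f] = (fun c => [set a; b; c]) @: (f :\: [set a; b])).
  rewrite card_in_imset; first by rewrite cardsDS // cards2 ab.
  by move=> x y /setDP[_ xn] /setDP[_ yn]; apply: mk3_inj; rewrite inE.
apply/setP => X; rewrite inE; apply/andP/imsetP.
  case=> [/imsetP[c cS ->] sub]; exists c => //; rewrite inE -in_setC cS (subsetP sub) //.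
  by rewrite !inE eqxx ?orbT.
case=> c; rewrite inE -in_setC => /andP[cS cf] ->; split; first by apply/imsetP; exists c.
by apply/subsetP => y; rewrite !inE => /orP[/orP[]|] /eqP ->.
Qed.

Lemma lam_eq n w (F : {set {set 'I_n}}) (a b : 'I_n) : @steiner_system 3 w n F -> (3 <= w) -> a != b ->
  #|[set f in F | (a \in f) && (b \in f)]| = (n - 2) %/ (w - 2).
Proof.
move=> SF w3 ab; rewrite -(pair_count SF ab) mulnK //; lia.
Qed.

Definition supp q n (x : word q n) : {set 'I_n} := [set i | nat_of_ord (x i) != 0].

Lemma in_supp q n (x : word q n) i : (i \in supp x) = (nat_of_ord (x i) != 0).
Proof. by rewrite inE. Qed.

Lemma key q n w d M (C : {set word q n}) x y : @is_code q n w d M C ->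
  x \in C -> y \in C -> x != y ->
  d + #|supp x :&: supp y| + #|[set i in supp x :&: supp y | x i == y i]| <= 2 * w.
Proof.
case=> Cw Cd _ xC yC xy.
have h := Cd x y xC yC xy.
have wx : #|supp x| = w := Cw x xC.
have wy : #|supp y| = w := Cw y yC.
set A := [set i in _ | _].
have AI : A \subset supp x :&: supp y by apply/subsetP => i; rewrite inE => /andP[].
have sub : [set i | x i != y i] \subset (supp x :|: supp y) :\: A.
  apply/subsetP => i; rewrite inE => nxy; rewrite inE; apply/andP; split.
    by rewrite inE negb_and nxy orbT.
  rewrite inE !in_supp; apply/negPn/negP => /norP[/negPn/eqP hx /negPn/eqP hy].
  by case/eqP: nxy; apply/val_inj; rewrite /= hx hy.
have : hdist x y <= #|(supp x :|: supp y) :\: A| := subset_leq_card sub.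
rewrite cardsDS; last by apply: subset_trans AI (subset_trans (subsetIl _ _) (subsetUl _ _)).
rewrite cardsU wx wy.
have := subset_leq_card AI.
have : #|supp x :&: supp y| <= #|supp x| by apply: subset_leq_card; exact: subsetIl.
rewrite wx; move: h; lia.
Qed.

Lemma nz_card q : #|[set i : 'I_q | nat_of_ord i != 0]| = q.-1.
Proof.
case: q => [|q].
  by apply/eqP; rewrite -leqn0; apply: leq_trans (max_card _) _; rewrite card_ord.
rewrite (_ : [set i | _] = [set~ ord0]) ?cardsC1 ?card_ord //.
by apply/setP => i; rewrite !inE; case: i => [[|i] ?].
Qed.

Lemma lower n w q B (C : {set word q n}) : 3 <= w -> w < n -> @steiner_system 3 w n B ->
  @is_code q n w (2*w-3+1) ('C(n,3) %/ 'C(w,3)) C -> (n-2) %/ (w-2) + 1 <= q.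
Proof.
move=> w3 wn SB HC.
have [Cw Cd CM] := HC.
have sw : forall x, x \in C -> #|supp x| = w := Cw.
have supp_inj : {in C &, injective (@supp q n)}.
  move=> x y xC yC E; case: (eqVneq x y) => // xy; have := key HC xC yC xy.
  rewrite E setIid sw //; lia.
pose F := (@supp q n) @: C.
have Fw : forall f, f \in F -> #|f| = w by move=> f /imsetP[x xC ->]; exact: sw.
have F1 : forall X : {set 'I_n}, #|X| = 3 -> #|[set f in F | X \subset f]| <= 1.
  move=> X X3; apply/card_le1_eqP => f1 f2; rewrite !inE.
  move=> /andP[/imsetP[x xC ->] s1] /andP[/imsetP[y yC ->] s2].
  case: (eqVneq x y) => [->//|xy]; exfalso; have := key HC xC yC xy.
  have : X \subset supp x :&: supp y by rewrite subsetI s1 s2.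
  move/subset_leq_card; rewrite X3; lia.
have cnt : #|F| * 'C(w,3) = 'C(n,3).
  rewrite card_in_imset // CM -(steiner_card SB) mulnK // bin_gt0 //.
have SF := packing Fw F1 cnt.
have n2 : 1 < n by lia.
pose a := Ordinal (ltnW n2); pose b := Ordinal n2.
have ab : a != b by [].
have lam := lam_eq SF w3 ab.
pose G := [set x in C | (a \in supp x) && (b \in supp x)].
have eqG : [set f in F | (a \in f) && (b \in f)] = (@supp q n) @: G.
  apply/setP => f; rewrite inE; apply/andP/imsetP.
    by case=> [/imsetP[x xC ->] h]; exists x => //; rewrite inE xC h.
  by case=> x; rewrite inE => /andP[xC h] ->; split => //; apply/imsetP; exists x.
rewrite eqG card_in_imset in lam; last first.
  by move=> x y; rewrite !inE => /andP[xC _] /andP[yC _]; apply: supp_inj.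
have : #|(fun x : word q n => x a) @: G| <= #|[set i : 'I_q | nat_of_ord i != 0]|.
  apply: subset_leq_card; apply/subsetP => i /imsetP[x]; rewrite !inE.
  by move=> /andP[_ /andP[ha _]] ->.
rewrite nz_card card_in_imset; last first.
  move=> x y; rewrite !inE => /andP[xC /andP[ax bx]] /andP[yC /andP[ay by']] E.
  case: (eqVneq x y) => // xy; exfalso.
  set A := [set i in supp x :&: supp y | x i == y i]; set I := supp x :&: supp y.
  have k : 2*w-3+1 + #|I| + #|A| <= 2*w := key HC xC yC xy.
  have h2 : 2 <= #|I|.
    have : [set a; b] \subset I by rewrite subUset !sub1set !inE ax bx ay by'.
    by move/subset_leq_card; rewrite cards2 ab.
  have h1 : 0 < #|A|.
    by apply/card_gt0P; exists a; rewrite !inE ax ay E eqxx.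
  lia.
have : 0 < (n - 2) %/ (w - 2) by rewrite divn_gt0; lia.
lia.
Qed.

Lemma sub3 n (I : {set 'I_n}) : 3 <= #|I| -> exists T : {set 'I_n}, T \subset I /\ #|T| = 3.
Proof.
move=> I3; have : 0 < #|[set A : {set 'I_n} | A \subset I & #|A| == 3]|.
  by rewrite cards_draws bin_gt0.
by case/card_gt0P => T; rewrite inE => /andP[TI /eqP T3]; exists T.
Qed.

Lemma inter2 n w (B : {set {set 'I_n}}) b1 b2 : @steiner_system 3 w n B ->
  b1 \in B -> b2 \in B -> b1 != b2 -> #|b1 :&: b2| <= 2.
Proof.
move=> [Bw B1] b1B b2B b12; rewrite leqNgt; apply/negP => /sub3 [T [TI T3]].
have := B1 T T3.
have : [set b1; b2] \subset [set b in B | T \subset b].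
  rewrite subUset !sub1set !inE b1B b2B.
  by rewrite (subset_trans TI (subsetIl _ _)) (subset_trans TI (subsetIr _ _)).
by move/subset_leq_card; rewrite cards2 b12 => /[swap] ->.
Qed.

Lemma upper n w (B : {set {set 'I_n}}) (Cls : 'I_n -> {set {set {set 'I_n}}}) :
  3 <= w -> w < n -> @steiner_system 3 w n B ->
  (forall p, partition (Cls p) (derived_blocks B p) /\
             forall P, P \in Cls p -> partition P [set~ p]) ->
  code_exists ((n-2)%/(w-2)).+1 n w (2*w-3+1) ('C(n,3) %/ 'C(w,3)).
Proof.
move=> w3 wn SB HC.
have [Bw B1] := SB.
set lam := (n-2) %/ (w-2).
pose idx p (b : {set 'I_n}) := index (pblock (Cls p) (b :\ p)) (enum (Cls p)).
have cover_eq p : cover (Cls p) = derived_blocks B p.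
  by apply: cover_partition; case: (HC p).
have inD p b : b \in B -> p \in b -> b :\ p \in derived_blocks B p.
  by move=> bB pb; apply/imsetP; exists b; rewrite // inE bB pb.
have clsP p b : b \in B -> p \in b -> pblock (Cls p) (b :\ p) \in Cls p.
  by move=> bB pb; apply: pblock_mem; rewrite cover_eq inD.
have card_cls p x : x != p -> #|Cls p| <= lam.
  move=> xp; have [Hpart Hcl] := HC p.
  have xc : forall P, P \in Cls p -> x \in cover P.
    by move=> P PC; rewrite (cover_partition (Hcl P PC)) !inE.
  pose g (P : {set {set 'I_n}}) := pblock P x.
  rewrite -(@card_in_imset _ _ g); last first.
    move=> P1 P2 P1C P2C E; apply/eqP/negPn/negP => neq.
    move: Hpart => /and3P[_ triv _].
    have := disjointFr ((trivIsetP triv) P1 P2 P1C P2C neq) (pblock_mem (xc P1 P1C)).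
    by move: E; rewrite /g => ->; rewrite pblock_mem // xc.
  apply: (@leq_trans #|[set d in derived_blocks B p | x \in d]|).
    apply: subset_leq_card; apply/subsetP => d /imsetP[P PC ->]; rewrite inE.
    rewrite mem_pblock xc // andbT -cover_eq.
    by apply/bigcupP; exists P => //; apply: pblock_mem; apply: xc.
  apply: (@leq_trans #|(fun c => c :\ p) @: [set c in B | (p \in c) && (x \in c)]|); last first.
    have px : p != x by rewrite eq_sym.
    by rewrite /lam -(lam_eq SB w3 px) leq_imset_card.
  apply: subset_leq_card; apply/subsetP => d; rewrite inE => /andP[/imsetP[c]].
  rewrite inE => /andP[cB pc] -> xd; apply/imsetP; exists c => //.
  by rewrite !inE cB pc; move: xd; rewrite inE => /andP[].
have idx_lt p b : b \in B -> p \in b -> idx p b < lam.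
  move=> bB pb.
  have : 0 < #|b :\ p| by move: (cardsD1 p b); rewrite pb Bw //; lia.
  case/card_gt0P => x; rewrite !inE => /andP[xp _].
  apply: (@leq_trans #|Cls p|); last exact: card_cls p x xp; rewrite cardE index_mem mem_enum; exact: clsP.
pose cw (b : {set 'I_n}) : word lam.+1 n :=
  [ffun i => if i \in b then inord (idx i b).+1 else ord0].
have val_cw b i : b \in B -> nat_of_ord (cw b i) = if i \in b then (idx i b).+1 else 0.
  by move=> bB; rewrite ffunE; case: ifP => // ib; rewrite inordK // ltnS idx_lt.
have supp_cw b : b \in B -> [set i | nat_of_ord (cw b i) != 0] = b.
  by move=> bB; apply/setP => i; rewrite inE val_cw //; case: ifP.
have diff1 b1 b2 i : b1 \in B -> b2 \in B -> i \in b1 -> i \notin b2 -> cw b1 i != cw b2 i.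
  move=> b1B b2B ib1 ib2; apply/negP => /eqP E; have := congr1 val E.
  by rewrite /= !val_cw // ib1 (negbTE ib2).
have common b1 b2 i j : b1 \in B -> b2 \in B -> b1 != b2 -> i \in b1 -> i \in b2 ->
    j \in b1 -> j \in b2 -> j != i -> cw b1 i != cw b2 i.
  move=> b1B b2B b12 ib1 ib2 jb1 jb2 ji; apply/negP => /eqP E; have := congr1 val E.
  rewrite /= !val_cw // ib1 ib2 => -[] Eidx.
  have Ep : pblock (Cls i) (b1 :\ i) = pblock (Cls i) (b2 :\ i).
    have := @index_inj _ set0 (enum (Cls i)) (pblock (Cls i) (b1 :\ i)) (pblock (Cls i) (b2 :\ i)).
    rewrite !mem_enum; apply; [exact: clsP|exact: clsP|exact: Eidx].
  have d1P : b1 :\ i \in pblock (Cls i) (b1 :\ i) by rewrite mem_pblock cover_eq inD.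
  have d2P : b2 :\ i \in pblock (Cls i) (b1 :\ i) by rewrite Ep mem_pblock cover_eq inD.
  have [_ Hcl] := HC i.
  move: (Hcl _ (clsP _ _ b1B ib1)) => /and3P[_ triv _].
  have d12 : b1 :\ i != b2 :\ i.
    apply/negP => /eqP E2; case/negP: b12; apply/eqP.
    by rewrite -(setD1K ib1) -(setD1K ib2) E2.
  have := disjointFr ((trivIsetP triv) _ _ d1P d2P d12) (_ : j \in b1 :\ i).
  by rewrite !inE ji jb1 jb2 => /(_ isT).
have dist b1 b2 : b1 \in B -> b2 \in B -> b1 != b2 ->
    2 * w - 3 + 1 <= hdist (cw b1) (cw b2).
  move=> b1B b2B b12.
  have s2 := inter2 SB b1B b2B b12.
  have U : #|b1 :|: b2| = w + w - #|b1 :&: b2| by rewrite cardsU (Bw b1) // (Bw b2).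
  have Iw : #|b1 :&: b2| <= w by rewrite -(Bw b1 b1B) subset_leq_card // subsetIl.
  have xor i : i \in b1 :|: b2 -> i \notin b1 :&: b2 -> cw b1 i != cw b2 i.
    move=> iU iI; case: (boolP (i \in b1)) => ib1; case: (boolP (i \in b2)) => ib2.
    - by move: iI; rewrite inE ib1 ib2.
    - exact: diff1.
    - by rewrite eq_sym diff1.
    - by move: iU; rewrite inE (negbTE ib1) (negbTE ib2).
  case: (ltngtP #|b1 :&: b2| 2) => [s1|s3|s2e].
  -   have : (b1 :|: b2) :\: (b1 :&: b2) \subset [set i | cw b1 i != cw b2 i].
        by apply/subsetP => i; rewrite inE => /andP[nI iU]; rewrite inE xor.
      move/subset_leq_card; rewrite cardsDS ?U; last first.
        by apply/subsetP => i; rewrite !inE => /andP[-> ->].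
      move=> h; have h' : w + w - #|b1 :&: b2| - #|b1 :&: b2| <= hdist (cw b1) (cw b2) := h.
      lia.
  - by move: s3; rewrite ltnNge s2.
  - have : b1 :|: b2 \subset [set i | cw b1 i != cw b2 i].
      apply/subsetP => i iU; rewrite inE.
      case: (boolP (i \in b1 :&: b2)) => iI; last exact: xor.
      have : 0 < #|(b1 :&: b2) :\ i| by move: (cardsD1 i (b1 :&: b2)); rewrite iI s2e; lia.
      case/card_gt0P => j; rewrite !inE => /andP[ji /andP[jb1 jb2]].
      by move: iI; rewrite inE => /andP[ib1 ib2]; apply: (common _ _ _ j).
    move/subset_leq_card; rewrite U => h.
    have h' : w + w - #|b1 :&: b2| <= hdist (cw b1) (cw b2) := h.
    lia.
have cw_inj : {in B &, injective cw}.
  by move=> b1 b2 b1B b2B E; rewrite -(supp_cw b1) // -(supp_cw b2) // E.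
exists (cw @: B); split.
- move=> x /imsetP[b bB ->]; rewrite /wt supp_cw //; exact: Bw.
- move=> x y /imsetP[b1 b1B ->] /imsetP[b2 b2B ->] ne; apply: dist => //.
  by apply: contraNneq ne => ->.
- by rewrite card_in_imset // -(steiner_card SB) mulnK // bin_gt0.
Qed.

Theorem mainTheorem10 (n w : nat) :
  (3 <= w)%N -> (w < n)%N ->
  (exists B : {set {set 'I_n}},
      @steiner_system 3 w n B /\
      forall p : 'I_n, resolvable [set~ p] (derived_blocks B p)) ->
  is_q0' 3 w n ((n - 2) %/ (w - 2) + 1).
Proof.
move=> w3 wn [B [SB res]].
have [Cls HC] := @fin_all_exists _ (fun _ => {set {set {set 'I_n}}})
  (fun p Cl => partition Cl (derived_blocks B p) /\
               forall P, P \in Cl -> partition P [set~ p]) res.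
rewrite addn1; split.
  exact: (upper w3 wn SB HC).
by move=> q [C HCq]; rewrite -addn1; exact: (lower w3 wn SB HCq).
Qed.
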